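(* Any conventional higher-order logic built on Combinatory ReFLect (CR) is inconsistent.
   Context: Combinatory ReFLect (CR) is defined as follows. Types: $\sigma ::= \mathsf{bool} \mid \mathsf{unit} \mid \mathsf{term} \mid \sigma_1 \to \sigma_2$. Terms: $e ::= \mathsf{I}_\sigma \mid \mathsf{K}_{\sigma,\tau} \mid \mathsf{S}_{\sigma,\tau,\upsilon} \mid \mathsf{value}_\sigma \mid \mathsf{lift} \mid \mathsf{app} \mid e_1\,e_2 \mid \ulcorner e\urcorner$, where $\ulcorner e\urcorner$ is the quotation of $e$. Typing rules: $\mathsf{I}_\sigma:\sigma\to\sigma$; $\mathsf{K}_{\sigma,\tau}:\sigma\to\tau\to\sigma$; $\mathsf{S}_{\sigma,\tau,\upsilon}:(\sigma\to\tau\to\upsilon)\to(\sigma\to\tau)\to\sigma\to\upsilon$; $\mathsf{value}_\sigma:\mathsf{term}\to\sigma$; $\mathsf{lift}:\mathsf{term}\to\mathsf{term}$; $\mathsf{app}:\mathsf{term}\to\mathsf{term}\to\mathsf{term}$; if $e_1:\sigma\to\tau$ and $e_2:\sigma$ then $e_1\,e_2:\tau$; if $e:\sigma$ then $\ulcorner e\urcorner:\mathsf{term}$. Reduction rules: $\mathsf{I}_\sigma\,e\Rightarrow e$; $\mathsf{K}_{\sigma,\tau}\,e_1\,e_2\Rightarrow e_1$; $\mathsf{S}_{\sigma,\tau,\upsilon}\,e_1\,e_2\,e_3\Rightarrow e_1\,e_3\,(e_2\,e_3)$; if $e:\sigma$ then $\mathsf{value}_\sigma\,\ulcorner e\urcorner\Rightarrow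 e$; $\mathsf{lift}\,\ulcorner s\urcorner\Rightarrow\ulcorner\ulcorner s\urcorner\urcorner$; if $e_1\,e_2$ is well typed then $\mathsf{app}\,\ulcorner e_1\urcorner\,\ulcorner e_2\urcorner\Rightarrow\ulcorner e_1\,e_2\urcorner$. A conventional higher-order logic built on CR is one formulated in the style of Church's simple theory of types / the HOL logic, but with CR (extended by the usual logical constants, including equality and negation $\neg:\mathsf{bool}\to\mathsf{bool}$, typed by the same type system) in place of the simply typed $\lambda$-calculus: its terms of type $\mathsf{bool}$ are formulas, provable equality is reflexive, symmetric, transitive and closed under congruence, every instance of a reduction rule $e\Rightarrow e'$ yields a theorem $\vdash e=e'$, and it has the usual classical rules for negation (so that a proof of $\vdash p = \neg p$ for a formula $p$ yields a contradiction). Inconsistent means that a contradiction (every formula, in particular falsity) is provable. *)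

(* Defs.v *)
Inductive ty : Type :=
| TBool : ty
| TUnit : ty
| TTerm : ty
| TArr : ty -> ty -> ty.

(* Terms of CR, extended by the logical constants of the logic:
   equality (at every type), negation, an arbitrary further family of
   logical constants [Cst c] (typed by a given assignment), and typed
   variables (as in Church's simple theory of types). *)
Inductive tm (LC : Type) : Type :=
| I_ : ty -> tm LC
| K_ : ty -> ty -> tm LC
| S_ : ty -> ty -> ty -> tm LC
| Value : ty -> tm LC
| Lift : tm LC
| AppC : tm LC
| Ap : tm LC -> tm LC -> tm LC
| Quote : tm LC -> tm LC
| Eq : ty -> tm LC
| Neg : tm LC
| Cst : LC -> tm LC
| Var : nat -> ty -> tm LC.

Arguments I_ {LC}. Arguments K_ {LC}. Arguments S_ {LC}. Arguments Value {LC}.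
Arguments Lift {LC}. Arguments AppC {LC}. Arguments Ap {LC}. Arguments Quote {LC}.
Arguments Eq {LC}. Arguments Neg {LC}. Arguments Cst {LC}. Arguments Var {LC}.

Section CR.
Variable LC : Type.
Variable ctype : LC -> ty.

Inductive has_type : tm LC -> ty -> Prop :=
| T_I : forall s, has_type (I_ s) (TArr s s)
| T_K : forall s t, has_type (K_ s t) (TArr s (TArr t s))
| T_S : forall s t u,
    has_type (S_ s t u)
      (TArr (TArr s (TArr t u)) (TArr (TArr s t) (TArr s u)))
| T_Value : forall s, has_type (Value s) (TArr TTerm s)
| T_Lift : has_type Lift (TArr TTerm TTerm)
| T_AppC : has_type AppC (TArr TTerm (TArr TTerm TTerm))
| T_Ap : forall e1 e2 s t,
    has_type e1 (TArr s t) -> has_type e2 s -> has_type (Ap e1 e2) t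
| T_Quote : forall e s, has_type e s -> has_type (Quote e) TTerm
| T_Eq : forall s, has_type (Eq s) (TArr s (TArr s TBool))
| T_Neg : has_type Neg (TArr TBool TBool)
| T_Cst : forall c, has_type (Cst c) (ctype c)
| T_Var : forall n s, has_type (Var n s) s.

Definition well_typed (e : tm LC) : Prop := exists s, has_type e s.

Inductive red : tm LC -> tm LC -> Prop :=
| R_I : forall s e, red (Ap (I_ s) e) e
| R_K : forall s t e1 e2, red (Ap (Ap (K_ s t) e1) e2) e1
| R_S : forall s t u e1 e2 e3,
    red (Ap (Ap (Ap (S_ s t u) e1) e2) e3) (Ap (Ap e1 e3) (Ap e2 e3))
| R_Value : forall s e, has_type e s -> red (Ap (Value s) (Quote e)) e
| R_Lift : forall e, red (Ap Lift (Quote e)) (Quote (Quote e))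
| R_App : forall e1 e2, well_typed (Ap e1 e2) ->
    red (Ap (Ap AppC (Quote e1)) (Quote e2)) (Quote (Ap e1 e2)).

Definition eqf (s : ty) (a b : tm LC) : tm LC := Ap (Ap (Eq s) a) b.

Record conventional_HOL : Type := {
  Prov : tm LC -> Prop;
  prov_refl : forall s a, has_type a s -> Prov (eqf s a a);
  prov_sym : forall s a b, Prov (eqf s a b) -> Prov (eqf s b a);
  prov_trans : forall s a b c,
      Prov (eqf s a b) -> Prov (eqf s b c) -> Prov (eqf s a c);
  prov_cong : forall s t f g a b,
      has_type f (TArr s t) -> has_type g (TArr s t) ->
      has_type a s -> has_type b s ->
      Prov (eqf (TArr s t) f g) -> Prov (eqf s a b) ->
      Prov (eqf t (Ap f a) (Ap g b));
  prov_red : forall s e e', has_type e s -> red e e' -> Prov (eqf s e e');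
  (* classical negation: a proof of p = ~p yields a contradiction,
     i.e. every formula becomes provable *)
  prov_neg_contra : forall p, has_type p TBool ->
      Prov (eqf TBool p (Ap Neg p)) ->
      forall q, has_type q TBool -> Prov q
}.

End CR.

Arguments Prov {LC ctype}.

(* Main.v *)
Require Import Defs.

Section Proof.
Variable LC : Type.
Variable ctype : LC -> ty.
Variable L : conventional_HOL LC ctype.

Notation HT := (has_type LC ctype).
Notation P := (Prov L).
Notation E := (eqf LC).

Ltac ty := repeat econstructor.

Lemma cong_r s t f a b : HT f (TArr s t) -> HT a s -> HT b s ->
  P (E s a b) -> P (E t (Ap f a) (Ap f b)).
Proof. intros. eapply (prov_cong _ _ L); eauto; eapply (prov_refl _ _ L); eauto. Qed.

Lemma cong_l s t f g a : HT f (TArr s t) -> HT g (TArr s t) -> HT a s ->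
  P (E (TArr s t) f g) -> P (E t (Ap f a) (Ap g a)).
Proof. intros. eapply (prov_cong _ _ L); eauto; eapply (prov_refl _ _ L); eauto. Qed.

Definition T := TTerm.
Definition B := TBool.
Definition inner1 : tm LC := Ap (Ap (S_ T T T) AppC) Lift.
Definition inner2 : tm LC := Ap (Ap (S_ T T B) (Ap (K_ (TArr T B) T) (Value B))) inner1.
Definition D : tm LC := Ap (Ap (S_ T B B) (Ap (K_ (TArr B B) T) Neg)) inner2.
Definition x : tm LC := Quote D.

Lemma HD : HT D (TArr T B). Proof. unfold D, inner2, inner1; ty. Qed.
Lemma Hx : HT x T. Proof. econstructor; apply HD. Qed.
Lemma HDx : HT (Ap D x) B. Proof. econstructor; [apply HD|apply Hx]. Qed.

Hint Resolve HD Hx HDx : core.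

Lemma key : P (E B (Ap D x) (Ap Neg (Ap D x))).
Proof.
  pose proof HD as HD'. pose proof Hx as Hx'.
  unfold D in HD'.
  assert (Hi2 : HT inner2 (TArr T B)) by (unfold inner2, inner1; ty).
  assert (Hi1 : HT inner1 (TArr T T)) by (unfold inner1; ty).
  assert (HVB : HT (Value B) (TArr T B)) by ty.
  assert (HAx : HT (Ap (Ap AppC x) (Ap Lift x)) T) by ty.
  assert (HDQ : HT (Quote (Ap D x)) T) by ty.
  eapply (prov_trans _ _ L).
  { apply (prov_red _ _ L). apply HDx. unfold D. apply R_S. }
  eapply (prov_trans _ _ L).
  { apply cong_l with (s := B) (g := Neg). 3: ty. ty. ty.
    apply (prov_red _ _ L). ty. apply R_K. }
  assert (HZ : HT (Ap (Value B) (Quote (Ap D x))) B) by ty.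
  eapply (prov_trans _ _ L).
  2: { apply cong_r with (s := B). ty. exact HZ. auto.
       apply (prov_red _ _ L). ty. apply R_Value. auto. }
  apply cong_r with (s := B). ty. unfold inner2, inner1; ty. auto.
  eapply (prov_trans _ _ L).
  { apply (prov_red _ _ L). 2: unfold inner2; apply R_S. unfold inner2, inner1; ty. }
  eapply (prov_trans _ _ L).
  { apply cong_l with (s := T) (g := Value B). 3: unfold inner1; ty. ty. ty.
    apply (prov_red _ _ L). ty. apply R_K. }
  apply cong_r with (s := T). ty. unfold inner1; ty. ty.
  eapply (prov_trans _ _ L).
  { apply (prov_red _ _ L). 2: unfold inner1; apply R_S. unfold inner1; ty. }
    eapply (prov_trans _ _ L).
    { apply cong_r with (s := T) (a := Ap Lift x) (b := Quote x). ty. ty. ty.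
      apply (prov_red _ _ L). ty. apply R_Lift. }
    apply (prov_red _ _ L). ty. apply R_App. exists B. auto.
Qed.

End Proof.

Theorem corollary1 :
  forall (LC : Type) (ctype : LC -> ty) (L : conventional_HOL LC ctype)
         (q : tm LC), has_type LC ctype q TBool -> Prov L q.
Proof.
  intros LC ctype L q Hq.
  eapply (prov_neg_contra _ _ L). 2: apply key. apply HDx. exact Hq.
Qed.
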